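(* Let $X$ be a space such that $\mathcal{N}_\Delta^{X^2}$ has calibre $(\omega_1,\omega)$. If $X$ is countably compact then $X$ is compact (and metrizable).
   Context: All spaces are Tychonoff. $\mathcal{N}_\Delta^{X^2}$ is the family of open neighborhoods of the diagonal $\Delta$ in $X^2$, ordered by reverse inclusion. A directed set has calibre $(\omega_1,\omega)$ if every uncountable subset contains an infinite subset with an upper bound. *)

(* Defs.v *)
From HB Require Import structures.
From mathcomp Require Import all_boot all_order all_algebra.
From mathcomp Require Import all_classical all_reals all_analysis.
Set Implicit Arguments. Unset Strict Implicit. Unset Printing Implicit Defensive.
Import Order.TTheory GRing.Theory Num.Theory.
Local Open Scope classical_set_scope.
Local Open Scope ring_scope.

Definition tychonoff_space (X : topologicalType) : Prop :=
  completely_regular_space X /\ hausdorff_space X.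

Definition calibre_w1_w (T : Type) (D : set T) (le : T -> T -> Prop) : Prop :=
  forall S : set T, S `<=` D -> ~ countable S ->
    exists S' : set T, [/\ S' `<=` S, infinite_set S' &
      exists u, D u /\ (forall s, S' s -> le s u)].

Definition diagonal (X : Type) : set (X * X) := [set xy | xy.1 = xy.2].

Definition diag_nbhds (X : topologicalType) : set (set (X * X)) :=
  [set U | open U /\ @diagonal X `<=` U].

Definition rev_incl (X : Type) (U V : set X) : Prop := V `<=` U.

(** Countably compact: every countable open cover has a finite subcover
    (countable covers enumerated by nat, repetitions allowed). *)
Definition countably_compact (X : topologicalType) : Prop :=
  forall F : nat -> set X, (forall n, open (F n)) ->
    setT `<=` \bigcup_n F n ->
    exists N : nat, setT `<=` \bigcup_(n in `I_N) F n.

Definition metrizable (R : realType) (X : topologicalType) : Prop :=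
  exists d : X -> X -> R,
    [/\ (forall x y, 0 <= d x y),
        (forall x y, d x y = 0 <-> x = y),
        (forall x y, d x y = d y x),
        (forall x y z, d x z <= d x y + d y z) &
        (forall A : set X, open A <->
           (forall x, A x -> exists2 e : R, 0 < e & [set y | d x y < e] `<=` A))].

(* Main.v *)
Require Import Defs.
From HB Require Import structures.
From mathcomp Require Import all_boot all_order all_algebra.
From mathcomp Require Import all_classical all_reals all_analysis.
From mathcomp Require Import lra.
Set Implicit Arguments. Unset Strict Implicit. Unset Printing Implicit Defensive.
Import Order.TTheory GRing.Theory Num.Theory.
Import numFieldTopology.Exports numFieldNormedType.Exports.
Local Open Scope classical_set_scope.
Local Open Scope ring_scope.

Definition seq_cluster (T : topologicalType) :=
  forall s : nat -> T, exists z : T, forall B, nbhs z B ->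
    forall N, exists2 k, (N <= k)%N & B (s k).

Lemma cc_seq_cluster (T : topologicalType) :
  countably_compact T -> seq_cluster T.
Proof.
move=> cc s; apply: contrapT => ncl.
pose G N := [set y | exists O : set T,
  [/\ open O, O y & forall k, (N <= k)%N -> ~ O (s k)]].
have oG N : open (G N).
  rewrite openE; move=> y [ O [oO Oy Ok]].
  rewrite /interior; apply: (@filterS _ _ _ O).
    by move=> w Ow; exists O.
  by have := oO; rewrite openE; apply.
have cG : setT `<=` \bigcup_n G n.
  move=> z _.
  have : ~ (forall B, nbhs z B -> forall N, exists2 k, (N <= k)%N & B (s k)).
    by move=> H; apply: ncl; exists z.
  move=> /existsNP [B] /not_implyP [zB] /existsNP [N] nk.
  exists N => //.
  move: zB; rewrite nbhsE => -[ O [oO Oz] OB].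
  exists O; split => // k Nk Osk; apply: nk; exists k => //; exact: OB.
have [M cov] := cc G oG cG.
have [n /= nM [ O [_ Osm nO]]] := cov (s M) I.
by apply: (nO M) => //; apply: ltnW.
Qed.

Lemma cpt_seq_cluster (T : topologicalType) :
  compact [set: T] -> seq_cluster T.
Proof.
move=> cpt s.
have [z [_ zc]] := cpt (s @ \oo) _ (filterT).
exists z => B zB N.
have : (s @ \oo) (s @` [set k | (N <= k)%N]).
  by exists N => // k /= Nk; exists k.
move=> /zc /(_ zB) [y [[k /= Nk <-] Bsk]].
by exists k.
Qed.

Lemma inj_seq (T : Type) (J : set T) : infinite_set J ->
  exists s : nat -> T, injective s /\ forall n, J (s n).
Proof.
move=> /infiniteP /card_leP [f].
exists (fun n => val (f (SigSub (mem_set (I : [set: nat] n))))).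
split; last by move=> n; exact: set_valP.
move=> m n /val_inj /(@inj _ _ _ f).
by move=> /(_ (mem_set I) (mem_set I)) /(congr1 val).
Qed.

Lemma openX' (X Y : topologicalType) (A : set X) (B : set Y) :
  open A -> open B -> open (A `*` B).
Proof.
move=> oA oB; rewrite openE => -[a b] [/= Aa Bb].
exists (A, B) => //; split => /=; apply: open_nbhs_nbhs; split => //.
Qed.

Definition NX (X : Type) (x : X) (W : set X) : set (X * X) :=
  (~` [set x]) `*` (~` [set x]) `|` W `*` W.

Lemma NX_diag (X : topologicalType) (x : X) (W : set X) :
  hausdorff_space X -> open W -> W x -> diag_nbhds (NX x W).
Proof.
move=> hX oW Wx; split.
  have cx : open (~` [set x]) by apply: closed_openC; apply: accessible_closed_set1; apply: hausdorff_accessible.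
  by apply: openU; apply: openX'.
move=> [a b] ab; have /= {ab} ab : a = b := ab; subst b.
have [->|ax] := pselect (a = x); first by right.
by left.
Qed.

Lemma NX_row (X : Type) (x y : X) (W : set X) : NX x W (x, y) -> W y.
Proof. by case=> -[] //= ? ?; exfalso. Qed.

Lemma NX_col (X : Type) (x y : X) (W : set X) : NX x W (y, x) -> W y.
Proof. by case=> -[] //= ? ?; exfalso. Qed.

Definition acc2 (X : topologicalType) (S : set (X * X)) :=
  forall J, J `<=` S -> infinite_set J -> exists z : X * X,
    forall B1 B2, nbhs z.1 B1 -> nbhs z.2 B2 ->
      exists p q, [/\ J p, J q, p <> q & [/\ B1 p.1, B1 q.1, B2 p.2 & B2 q.2]].

Lemma key (X : topologicalType) : hausdorff_space X ->
  calibre_w1_w (@diag_nbhds X) (@rev_incl (X * X)) ->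
  forall (S : set (X * X)) (U V : X * X -> set X),
  (forall p, open (U p)) -> (forall p, open (V p)) ->
  (forall p, S p -> U p p.1 /\ V p p.2) -> acc2 S ->
  ~ countable S -> exists p q, [/\ S p, S q, p <> q,
      (U p q.1 /\ V p q.2) & (U q p.1 /\ V q p.2)].
Proof.
move=> hX cal S U V oU oV SUV acc nS.
pose N p := NX p.1 (U p) `&` NX p.2 (V p).
have DN p : S p -> diag_nbhds (N p).
  move=> Sp; have [Up Vp] := SUV p Sp.
  have [ o1 d1] := NX_diag hX (oU p) Up.
  have [ o2 d2] := NX_diag hX (oV p) Vp.
  by split; [apply: openI | move=> w dw; split; [apply: d1|apply: d2]].
have [J [JS iJ [W [DW WN]]]] : exists J, [/\ J `<=` S, infinite_set J &
    exists W, diag_nbhds W /\ forall p, J p -> W `<=` N p].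
  have [cN|ncN] := pselect (countable (N @` S)).
    have [M [[p0 Sp0 <-] ncM]] : exists M, (N @` S) M /\
        ~ countable (S `&` N @^-1` [set M]).
      apply: contrapT => H; apply: nS.
      apply: (@sub_countable _ _ _ (\bigcup_(M in N @` S) (S `&` N @^-1` [set M]))).
        apply: subset_card_le => p Sp; exists (N p); first by exists p.
        by split.
      apply: bigcup_countable => // M NM; apply: contrapT => ncM.
      by apply: H; exists M.
    exists (S `&` N @^-1` [set N p0]); split.
    - by move=> p [].
    - by move=> fin; apply: ncM; apply: finite_set_countable.
    - exists (N p0); split; first exact: DN.
      by move=> p [_ /= ->].
  have sub : N @` S `<=` @diag_nbhds X by move=> _ [p Sp <-]; exact: DN.
  have [S' [S'sub iS' [W [DW WS']]]] := cal _ sub ncN.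
  exists (S `&` N @^-1` S'); split.
  - by move=> p [].
  - move=> fin; apply: iS'; apply: (@sub_finite_set _ _ (N @` (S `&` N @^-1` S'))).
      move=> M S'M; have [p Sp NpM] := S'sub M S'M.
      by exists p => //; split => //=; rewrite NpM.
    exact: finite_image.
  - exists W; split => // p [_ S'Np]; exact: WS'.
have [z zacc] := acc J JS iJ.
have nW (w : X) : nbhs (w, w) W.
  case: DW => oW dW.
  by have := oW; rewrite openE; apply; apply: dW.
have [[P1 Q1] [/= P1z Q1z] PQ1] := nW z.1.
have [[P2 Q2] [/= P2z Q2z] PQ2] := nW z.2.
have [p [q [Jp Jq pq [B1p B1q B2p B2q]]]] :=
  zacc (P1 `&` Q1) (P2 `&` Q2) (filterI P1z Q1z) (filterI P2z Q2z).
have W1 a b : (P1 `&` Q1) a -> (P1 `&` Q1) b -> W (a, b).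
  by move=> [Pa _] [_ Qb]; apply: PQ1.
have W2 a b : (P2 `&` Q2) a -> (P2 `&` Q2) b -> W (a, b).
  by move=> [Pa _] [_ Qb]; apply: PQ2.
exists p, q; split => //; try exact: JS.
- split.
  + by have [+ _] := WN p Jp _ (W1 _ _ B1p B1q); apply: NX_row.
  + by have [_ +] := WN p Jp _ (W2 _ _ B2p B2q); apply: NX_row.
- split.
  + by have [+ _] := WN q Jq _ (W1 _ _ B1q B1p); apply: NX_row.
  + by have [_ +] := WN q Jq _ (W2 _ _ B2q B2p); apply: NX_row.
Qed.

Lemma weak_sep_cover (T : Type) (Y : set T) (Bf : T -> set T) :
  (forall p, Y p -> Bf p p) ->
  (forall S, S `<=` Y -> ~ countable S ->
     exists p q, [/\ S p, S q, p <> q, Bf p q & Bf q p]) ->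
  exists A, [/\ A `<=` Y, countable A & Y `<=` \bigcup_(a in A) Bf a].
Proof.
move=> Bpp H.
pose P := [set A : set T | A `<=` Y /\
  forall p q, A p -> A q -> p <> q -> ~ (Bf p q /\ Bf q p)].
have [A [[AY Asep] Amax]] : exists A, P A /\ forall B, A `<` B -> ~ P B.
  apply: Zorn_bigcup => F FP Ftot; split.
    by move=> x [A FA Ax]; have [+ _] := FP A FA; apply.
  move=> p q [A1 FA1 A1p] [A2 FA2 A2q] pq.
  have [A12|A21] := Ftot A1 A2 FA1 FA2.
  - by have [_ +] := FP A2 FA2; apply => //; apply: A12.
  - by have [_ +] := FP A1 FA1; apply => //; apply: A21.
exists A; split => //.
  apply: contrapT => nA.
  have [p [q [Ap Aq pq Bpq Bqp]]] := H A AY nA.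
  by apply: (Asep p q).
move=> q Yq.
have [[a Aa Baq]|nB] := pselect (exists2 a, A a & Bf a q); first by exists a.
have [Aq|nAq] := pselect (A q); first by exists q => //; apply: Bpp.
exfalso; apply: (Amax (A `|` [set q])).
  split; first by move=> x Ax; left.
  by move=> /(_ q (or_intror erefl)).
split.
  by move=> x [/AY|->].
move=> x y [Ax|->] [Ay|->] xy.
- exact: Asep.
- by move=> [Bxq _]; apply: nB; exists x.
- by move=> [_ Byq]; apply: nB; exists y.
- by [].
Qed.

Lemma diag_acc2 (X : topologicalType) (S : set (X * X)) :
  countably_compact X -> S `<=` (@Defs.diagonal X) -> acc2 S.
Proof.
move=> cc SD J JS iJ.
have [s [sinj Js]] := inj_seq iJ.
have [z zc] := cc_seq_cluster cc (fun n => (s n).1).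
exists (z, z) => B1 B2 /= zB1 zB2.
have zB : nbhs z (B1 `&` B2) by apply: filterI.
have [k0 _ [B1k0 B2k0]] := zc _ zB 0%N.
have [k1 k01 [B1k1 B2k1]] := zc _ zB k0.+1.
have d k : (s k).2 = (s k).1 by have := SD _ (JS _ (Js k)).
exists (s k0), (s k1); split => //.
  move=> /sinj eqk; move: k01; rewrite eqk.
  by rewrite ltnn.
by split => //; rewrite d.
Qed.

Lemma stepA (X : topologicalType) : hausdorff_space X ->
  calibre_w1_w (@diag_nbhds X) (@rev_incl (X * X)) ->
  countably_compact X -> compact [set: X].
Proof.
move=> hX cal cc F PF _; apply: contrapT => ncl.
have : forall z : X, exists OA : set X * set X,
    [/\ open OA.1, OA.1 z, F OA.2 & OA.1 `&` OA.2 = set0].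
  move=> z; have : ~ (F `#` nbhs z).
    by move=> H; apply: ncl; exists z.
  move=> /existsNP [A] /existsNP [B] /not_implyP [FA] /not_implyP [zB] nAB.
  move: zB; rewrite nbhsE => -[ O [oO Oz] OB].
  exists (O, A); split => //=.
  apply/seteqP; split => // y [Oy Ay]; apply: nAB; exists y; split => //.
  exact: OB.
move=> /choice [OA HOA].
pose Oz z := (OA z).1.
pose Bf (p : X * X) := Oz p.1 `*` Oz p.1.
have [A [AD cA cov]] : exists A, [/\ A `<=` (@Defs.diagonal X), countable A &
    (@Defs.diagonal X) `<=` \bigcup_(a in A) Bf a].
  apply: weak_sep_cover.
    move=> [a b] ab; have /= {ab} ab : a = b := ab; subst b.
    by have [] := HOA a.
  move=> S SD nS.
  have [|||p [q [Sp Sq pq [Upq Vpq] [Uqp Vqp]]]] :=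
    @key X hX cal S (fun p => Oz p.1) (fun p => Oz p.1) _ _ _ (diag_acc2 cc SD) nS.
  - by move=> p; have [] := HOA p.1.
  - by move=> p; have [] := HOA p.1.
  - move=> p Sp; have := SD p Sp; case: p Sp => a b Sab ab.
    have /= {ab} ab : a = b := ab; subst b.
    by have [] := HOA a.
  by exists p, q; split.
have [A0|[e]] := pfcard_geP cA.
  have [x _] := filter_ex (filterT : F setT).
  have [a] := cov (x, x) erefl.
  by rewrite A0.
have oF n : open (Oz (e n).1) by have [] := HOA (e n).1.
have cF : setT `<=` \bigcup_n Oz (e n).1.
  move=> x _; have [a Aa [Ox _]] := cov (x, x) erefl.
  have [n _ en] := @surj _ _ _ _ e a Aa.
  by exists n => //; rewrite en.
have [M covM] := cc _ oF cF.
have FC : F [set y | forall i : 'I_M, (OA (e i).1).2 y].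
  apply: filter_forall => i.
  by have [] := HOA (e i).1.
have [y Cy] := filter_ex FC.
have [n /= nM Oy] := covM y I.
have := Cy (Ordinal nM) => /= Ay.
have [_ _ _ E] := HOA (e n).1.
by have : set0 y by rewrite -E.
Qed.

Lemma cpt_acc2 (X : topologicalType) (S : set (X * X)) :
  compact [set: X] -> acc2 S.
Proof.
move=> cX J JS iJ.
have cXX : compact [set: X * X] by rewrite -setXTT; apply: compact_setX.
have [s [sinj Js]] := inj_seq iJ.
have [z zc] := cpt_seq_cluster cXX s.
exists z => B1 B2 zB1 zB2.
have zB : nbhs z (B1 `*` B2) by exists (B1, B2).
have [k0 _ [B1k0 B2k0]] := zc _ zB 0%N.
have [k1 k01 [B1k1 B2k1]] := zc _ zB k0.+1.
exists (s k0), (s k1); split => //.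
move=> /sinj eqk; move: k01; rewrite eqk.
by rewrite ltnn.
Qed.

Lemma stepB (R : realType) (X : topologicalType) :
  completely_regular_space X -> hausdorff_space X ->
  calibre_w1_w (@diag_nbhds X) (@rev_incl (X * X)) ->
  compact [set: X] ->
  exists g : nat -> X -> R, [/\ forall n, continuous (g n),
    forall n x, 0 <= g n x <= 1 &
    forall x y, x <> y -> exists n, g n x != g n y].
Proof.
move=> crs hX cal cX.
pose f (p : X * X) : X -> R := @Urysohn X R [set p.1] [set p.2].
have fc p : continuous (f p) by apply: Urysohn_continuous.
have fr p x : 0 <= f p x <= 1.
  have := @Urysohn_range X R [set p.1] [set p.2] (f p x) (ex_intro2 _ _ x I erefl).
  by rewrite /= in_itv.  
have f01 p : p.1 <> p.2 -> f p p.1 = 0 /\ f p p.2 = 1.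
  move=> np; have us : uniform_separator [set p.1] [set p.2].
    apply: crs; first by apply: accessible_closed_set1; apply: hausdorff_accessible.
    by move=> /= e; apply: np.
  split.
    by apply: (@Urysohn_sub0 X R _ _ us); exists p.1.
  by apply: (@Urysohn_sub1 X R _ _ us); exists p.2.
pose U p := f p @^-1` [set r : R | r < 1/3].
pose V p := f p @^-1` [set r : R | 2/3 < r].
have oU p : open (U p).
  by apply: open_comp; [move=> x _; apply: fc | apply: open_lt].
have oV p : open (V p).
  by apply: open_comp; [move=> x _; apply: fc | apply: open_gt].
pose Y := [set p : X * X | p.1 <> p.2].
have [A [AY cA cov]] : exists A, [/\ A `<=` Y, countable A &
    Y `<=` \bigcup_(a in A) (U a `*` V a)].
  apply: weak_sep_cover.
    move=> p Yp; have [h0 h1] := f01 p Yp.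
    by rewrite /U /V /= h0 h1; split => //=; lra.
  move=> S SY nS.
  have [|p [q [Sp Sq pq [Upq Vpq] [Uqp Vqp]]]] :=
    @key X hX cal S U V oU oV _ (@cpt_acc2 X S cX) nS.
  - move=> p Sp; have [h0 h1] := f01 p (SY p Sp).
    by rewrite /U /V /= h0 h1; split => //=; lra.
  by exists p, q; split.
have [A0|[e]] := pfcard_geP cA.
  exists (fun _ _ => 0); split => //.
  - by move=> n; apply: cst_continuous.
  - by move=> n x; rewrite lexx ler01.
  - move=> x y xy; have [a] := cov (x, y) xy.
    by rewrite A0.
exists (fun n => f (e n)); split => //.
move=> x y xy; have [a Aa [/= Uax Vay]] := cov (x, y) xy.
have [n _ en] := @surj _ _ _ _ e a Aa.
exists n; rewrite en; apply/eqP => E.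
rewrite /U /V /= E in Uax Vay.
move: Uax Vay; generalize (f a y) => t h1 h2.
have H := lt_trans h2 h1; clear -H; lra.
Qed.

Lemma small_inv (R : realType) (e : R) : 0 < e ->
  exists N : nat, forall k, (N <= k)%N -> k.+1%:R^-1 < e.
Proof.
move=> e0; have [N _ HN] := near_infty_natSinv_lt (PosNum e0).
by exists N => k Nk; apply: HN.
Qed.

Section Metric.
Variables (R : realType) (X : topologicalType) (g : nat -> X -> R).
Hypothesis gr : forall n x, 0 <= g n x <= 1.

Definition tt n x y := `|g n x - g n y| * (n.+1%:R)^-1.
Definition dd x y := sup (range (fun n => tt n x y)).

Lemma tt_ge0 n x y : 0 <= tt n x y.
Proof. by rewrite /tt mulr_ge0 // invr_ge0 ler0n. Qed.

Lemma tt_le_abs n x y : tt n x y <= `|g n x - g n y|.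
Proof.
rewrite /tt ler_piMr // invf_le1 ?ltr0n // ler1n //.
Qed.

Lemma abs_le1 n x y : `|g n x - g n y| <= 1.
Proof.
have := gr n x; have := gr n y => /andP[h1 h2] /andP[h3 h4].
rewrite ler_norml; apply/andP; split; lra.
Qed.

Lemma tt_le_inv n x y : tt n x y <= n.+1%:R^-1.
Proof. by rewrite /tt ler_piMl ?invr_ge0 ?ler0n // abs_le1. Qed.

Lemma tt_le1 n x y : tt n x y <= 1.
Proof. by rewrite (le_trans (tt_le_abs _ _ _)) // abs_le1. Qed.

Lemma dd_ub x y : has_ubound (range (fun n => tt n x y)).
Proof. by exists 1 => _ [n _ <-]; apply: tt_le1. Qed.

Lemma tt_le_dd n x y : tt n x y <= dd x y.
Proof. by apply: (ub_le_sup (dd_ub x y)); exists n. Qed.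

Lemma dd_le x y c : (forall n, tt n x y <= c) -> dd x y <= c.
Proof.
move=> H; apply: ge_sup; first by exists (tt 0 x y), 0%N.
by move=> _ [n _ <-].
Qed.

End Metric.

Lemma stepC (R : realType) (X : topologicalType) (g : nat -> X -> R) :
  compact [set: X] -> (forall n, continuous (g n)) ->
  (forall n x, 0 <= g n x <= 1) ->
  (forall x y, x <> y -> exists n, g n x != g n y) -> metrizable R X.
Proof.
move=> cX gc gr gs.
exists (dd g); split.
- move=> x y; exact: le_trans (tt_ge0 _ 0 _ _) (tt_le_dd gr 0 x y).
- move=> x y; split => [d0|->].
    apply: contrapT => /gs [n /eqP gn].
    have := tt_le_dd gr n x y; rewrite d0.
    have : 0 < tt g n x y.
      by rewrite /tt mulr_gt0 ?invr_gt0 ?ltr0n // normr_gt0 subr_eq0; apply/eqP.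
    by move=> /lt_le_trans h /h; rewrite ltxx.
  apply/le_anti/andP; split; last exact: le_trans (tt_ge0 _ 0 _ _) (tt_le_dd gr 0 y y).
  by apply: dd_le => n; rewrite /tt subrr normr0 mul0r.
- move=> x y; rewrite /dd; congr sup; apply/seteqP; split => _ [n _ <-]; exists n => //;
    by rewrite /tt distrC.
- move=> x y z; apply: dd_le => n.
  apply: le_trans (lerD (tt_le_dd gr n x y) (tt_le_dd gr n y z)).
  by rewrite /tt -mulrDl ler_wpM2r ?invr_ge0 ?ler0n // ler_distD.
move=> A; split.
  move=> oA x Ax; apply: contrapT => nb.
  have : forall k : nat, exists y, dd g x y < k.+1%:R^-1 /\ ~ A y.
    move=> k; apply: contrapT => nk; apply: nb; exists k.+1%:R^-1.
      by rewrite invr_gt0 ltr0n.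
    move=> y /= dy; apply: contrapT => nAy; apply: nk; by exists y; split.
  move=> /choice [ys Hys].
  have [z zc] := cpt_seq_cluster cX ys.
  have nAz : ~ A z.
    move=> Az; have zA : nbhs z A by have := oA; rewrite openE; apply.
    have [k _ Ayk] := zc _ zA 0%N.
    by have [_] := Hys k.
  have zx : z <> x by move=> zx; apply: nAz; rewrite zx.
  have [n gn] := gs _ _ zx.
  set del := `|g n z - g n x|.
  have del0 : 0 < del by rewrite normr_gt0 subr_eq0.
  have del20 : 0 < del / 2 by rewrite divr_gt0.
  have e0 : 0 < del / 2 * (n.+1%:R)^-1 by rewrite mulr_gt0 ?invr_gt0 ?ltr0n.
  have [N HN] := small_inv e0.
  have B : nbhs z [set w | `|g n z - g n w| < del / 2].
    exact: cvgr_dist_lt (gc n z) _ del20.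
  have [k Nk Bk] := zc _ B N.
  have [dk _] := Hys k.
  have : del / 2 * (n.+1%:R)^-1 < tt g n x (ys k).
    rewrite /tt ltr_pM2r ?invr_gt0 ?ltr0n //.
    have := ler_distD (g n (ys k)) (g n z) (g n x).
    rewrite -/del [`|g n (ys k) - g n x|]distrC => h.
    move: Bk => /= h2; clear -h h2; lra.
  move=> /lt_le_trans /(_ (tt_le_dd gr n x (ys k))) h.
  have := lt_trans h (lt_trans dk (HN _ Nk)).
  by rewrite ltxx.
move=> Hb; rewrite openE => x Ax.
have [e e0 eA] := Hb x Ax.
have e20 : 0 < e / 2 by rewrite divr_gt0.
have [N HN] := small_inv e20.
rewrite /interior; apply: (filterS eA).
have : \forall y \near x, forall i : 'I_N, `|g i x - g i y| < e / 2.
  apply: filter_forall => i; exact: cvgr_dist_lt (gc i x) _ e20.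
apply: filterS => y Hy /=.
apply: (@le_lt_trans _ _ (e / 2)); last by rewrite ltr_pdivrMr // ltr_pMr // ltr1n.
apply: dd_le => k; apply: ltW.
have [kN|Nk] := ltnP k N.
  have /= Hk := Hy (Ordinal kN).
  exact: le_lt_trans (tt_le_abs g k x y) Hk.
exact: le_lt_trans (tt_le_inv gr _ _ _) (HN _ Nk).
Qed.

Theorem mainTheorem12 (R : realType) (X : topologicalType) :
  tychonoff_space X ->
  calibre_w1_w (@diag_nbhds X) (@rev_incl (X * X)) ->
  countably_compact X ->
  compact [set: X] /\ metrizable R X.
Proof.
move=> [crs hX] cal cc.
have cX := stepA hX cal cc.
split => //.
have [g [gc gr gs]] := @stepB R X crs hX cal cX.
exact: stepC cX gc gr gs.
Qed.
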